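(* Let $d\ge 2$ and let $\{Q_j\}_{j=1}^{d^2}$ be a normal quasiprobability representation (NQPR) in dimension $d$. Then $$N^-\le N(\{Q_j\})\le N^+,\qquad N^-=\frac{\sqrt{d+1}-1}{d},\quad N^+=\frac{(d-1)\sqrt{d+1}-1}{d}.$$ The lower bound is attained if and only if there is a SIC $\{\Pi_j\}_{j=1}^{d^2}$ in dimension $d$ such that $Q_j=Q_j^-$ for all $j$. If $\{Q_j\}$ is group covariant, then the upper bound is attained if and only if there is a SIC $\{\Pi_j\}_{j=1}^{d^2}$ such that $Q_j=Q_j^+$ for all $j$.
   Context: A normal quasiprobability representation (NQPR) in dimension $d$ is a family $\{Q_j\}_{j=1}^{d^2}$ of Hermitian operators on $\mathbb{C}^d$ with $\operatorname{tr}(Q_j)=1$ and $\operatorname{tr}(Q_jQ_k)=d\,\delta_{jk}$ for all $j,k$ (so they form an orthogonal operator basis, and $\sum_j Q_j=d\cdot 1$). The negativity of a density operator $\rho$ with respect to $\{Q_j\}$ is $N(\rho)=\max\{0,-\min_j\operatorname{tr}(\rho Q_j)\}$, and the negativity $N(\{Q_j\})$ of the NQPR is the maximum of $N(\rho)$ over all density operators $\rho$ on $\mathbb{C}^d$ (equivalently, $|\min_j\lambda_{\min}(Q_j)|$). A SIC in dimension $d$ is a set $\{\Pi_j\}_{j=1}^{d^2}$ of rank-one projectors on $\mathbb{C}^d$ with $\operatorname{tr}(\Pi_j\Pi_k)=(d\delta_{jk}+1)/(d+1)$. Given a SIC, define $Q_j^\pm=\mp\sqrt{d+1}\,\Pi_j+\frac{1}{d}(1\pm\sqrt{d+1})$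 (where $1$ denotes the identity operator in the operator term). The symmetry group of $\{Q_j\}$ is the group of unitaries $U$ on $\mathbb{C}^d$ such that $\{UQ_jU^\dagger\}_j=\{Q_j\}_j$ as sets; $\{Q_j\}$ is group covariant if its symmetry group acts transitively (by conjugation) on $\{Q_j\}$. *)

(* Defs.v *)
From HB Require Import structures.
From mathcomp Require Import all_boot all_order all_algebra.
From mathcomp Require Import sesquilinear spectral.
From mathcomp Require Import complex.
From mathcomp Require Import boolp classical_sets reals.
Set Implicit Arguments. Unset Strict Implicit. Unset Printing Implicit Defensive.
Import Order.TTheory GRing.Theory Num.Theory.
Local Open Scope ring_scope.
Local Open Scope sesquilinear_scope.

Section NQPR.
Variable R : realType.
Local Notation C := (R[i]).

Definition hermitianmx (d : nat) (A : 'M[C]_d) : Prop := A ^t* = A.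

Definition psdmx (d : nat) (A : 'M[C]_d) : Prop :=
  forall v : 'rV[C]_d, 0 <= (v *m A *m v ^t*) 0 0.

Definition density (d : nat) (rho : 'M[C]_d) : Prop :=
  [/\ hermitianmx rho, psdmx rho & \tr rho = 1].

Definition NQPR (d : nat) (Q : 'I_(d ^ 2) -> 'M[C]_d) : Prop :=
  (forall j, hermitianmx (Q j)) /\ (forall j, \tr (Q j) = 1) /\
  (forall j k, \tr (Q j *m Q k) = (d%:R * (j == k)%:R)).

(* N(rho) = max{0, - min_j tr(rho Q_j)} (tr(rho Q_j) is real for Hermitian
   rho, Q_j; we take its real part) *)
Definition negativity_state (d : nat) (Q : 'I_(d ^ 2) -> 'M[C]_d)
  (rho : 'M[C]_d) : R :=
  Num.max 0 (\big[Num.max/0]_(j < d ^ 2) (- complex.Re (\tr (rho *m Q j)))).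

(* N({Q_j}) = max over density operators of N(rho) (the sup is attained) *)
Definition negativity (d : nat) (Q : 'I_(d ^ 2) -> 'M[C]_d) : R :=
  sup [set x : R | exists2 rho : 'M[C]_d, density rho & x = negativity_state Q rho].

Definition SIC (d : nat) (P : 'I_(d ^ 2) -> 'M[C]_d) : Prop :=
  (forall j, hermitianmx (P j)) /\ (forall j, P j *m P j = P j) /\
  (forall j, \rank (P j) = 1%N) /\
  (forall j k, \tr (P j *m P k) = (d%:R * (j == k)%:R + 1) / (d.+1)%:R).

Definition sqrtd1 (d : nat) : C := ((Num.sqrt (d.+1%:R : R))%:C)%C.

Definition Qminus (d : nat) (P : 'I_(d ^ 2) -> 'M[C]_d) (j : 'I_(d ^ 2)) : 'M[C]_d :=
  sqrtd1 d *: P j + ((1 - sqrtd1 d) / d%:R)%:M.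

Definition Qplus (d : nat) (P : 'I_(d ^ 2) -> 'M[C]_d) (j : 'I_(d ^ 2)) : 'M[C]_d :=
  - (sqrtd1 d *: P j) + ((1 + sqrtd1 d) / d%:R)%:M.

Definition symmetry (d : nat) (Q : 'I_(d ^ 2) -> 'M[C]_d) (U : 'M[C]_d) : Prop :=
  U \is unitarymx /\
  (forall j, exists k, U *m Q j *m U ^t* = Q k) /\
  (forall k, exists j, U *m Q j *m U ^t* = Q k).

Definition group_covariant (d : nat) (Q : 'I_(d ^ 2) -> 'M[C]_d) : Prop :=
  forall j k, exists U, symmetry Q U /\ U *m Q j *m U ^t* = Q k.

Definition Nminus (d : nat) : R := (Num.sqrt (d.+1%:R : R) - 1) / d%:R.
Definition Nplus (d : nat) : R :=
  ((d.-1)%:R * Num.sqrt (d.+1%:R : R) - 1) / d%:R.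

End NQPR.

(* Main.v *)
Require Import Defs.
From HB Require Import structures.
From mathcomp Require Import all_boot all_order all_algebra.
From mathcomp Require Import sesquilinear spectral complex.
From mathcomp Require Import boolp classical_sets reals.
From mathcomp Require Import ring lra.
Import Order.TTheory GRing.Theory Num.Theory.
Local Open Scope ring_scope.
Set Implicit Arguments. Unset Strict Implicit. Unset Printing Implicit Defensive.
Section S.
Variable R : realType.
Local Notation C := (R[i]).
Local Open Scope sesquilinear_scope.

Lemma herm_sym n (A : 'M[C]_n) : Defs.hermitianmx A -> A \is hermsymmx.
Proof. by move=> h; apply/is_hermitianmxP; rewrite expr0 scale1r h. Qed.

Definition lam n (A : 'M[C]_n) (i : 'I_n) : R := complex.Re (spectral_diag A 0 i).
Definition UU n (A : 'M[C]_n) := spectralmx A.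

Lemma UU_unit n (A : 'M[C]_n) : UU A *m (UU A)^t* = 1%:M.
Proof. exact/unitarymxP/spectral_unitarymx. Qed.
Lemma UU_unit' n (A : 'M[C]_n) : (UU A)^t* *m UU A = 1%:M.
Proof. exact/mulmx1C/UU_unit. Qed.

Lemma spec_decomp n (A : 'M[C]_n) : Defs.hermitianmx A ->
  A = (UU A)^t* *m diag_mx (\row_i ((lam A i)%:C)%C) *m UU A.
Proof.
move=> /herm_sym hA.
have /hermitian_normalmx /orthomx_spectralP E := hA.
rewrite {1}E invmx_unitary ?spectral_unitarymx //; congr (_ *m _ *m _).
congr diag_mx; apply/rowP => i; rewrite mxE /lam.
have /mxOverP /(_ 0 i) := hermitian_spectral_diag_real hA.
by move=> /RRe_real.
Qed.

Lemma ctM m n p (A : 'M[C]_(m,n)) (B : 'M[C]_(n,p)) : (A *m B)^t* = B^t* *m A^t*.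
Proof. by rewrite trmx_mul map_mxM. Qed.

Lemma dot_ge0 n (w : 'rV[C]_n) : 0 <= (w *m w^t*) 0 0.
Proof.
rewrite !mxE sumr_ge0 // => k _; rewrite !mxE; exact: mul_conjC_ge0.
Qed.

Lemma psd_ct n m (V : 'M[C]_(m, n)) : psdmx (V^t* *m V).
Proof.
move=> v; have -> : v *m (V^t* *m V) *m v^t* = (v *m V^t*) *m (v *m V^t*)^t*.
  by rewrite ctM trmxCK !mulmxA.
exact: dot_ge0.
Qed.

Lemma row_sandwich m n (U : 'M[C]_(m, n)) (X : 'M[C]_n) i :
  (row i U *m X *m (row i U)^t*) 0 0 = (U *m X *m U^t*) i i.
Proof.
by rewrite !mxE; apply: eq_bigr => k _; rewrite !mxE; congr (_ * _);
  apply: eq_bigr => l _; rewrite !mxE.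
Qed.

Lemma psd_entry n m (rho : 'M[C]_n) (V : 'M[C]_(m, n)) i :
  psdmx rho -> 0 <= (V *m rho *m V^t*) i i.
Proof. by move=> h; rewrite -row_sandwich. Qed.

Lemma psd_tr n m (rho : 'M[C]_n) (V : 'M[C]_(m, n)) :
  psdmx rho -> 0 <= \tr (V *m rho *m V^t*).
Proof. by move=> h; rewrite /mxtrace sumr_ge0 // => i _; exact: psd_entry. Qed.

Lemma tr_conj n (U X : 'M[C]_n) : U *m U^t* = 1%:M -> \tr (U^t* *m X *m U) = \tr X.
Proof. by move=> h; rewrite mxtrace_mulC mulmxA h mul1mx. Qed.

Lemma trace11 (M : 'M[C]_1) : \tr M = M 0 0.
Proof. by rewrite /mxtrace big_ord1. Qed.

Lemma density_u n (u : 'rV[C]_n) : (u *m u^t*) 0 0 = 1 -> density (u^t* *m u).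
Proof.
move=> h; split; last by rewrite mxtrace_mulC trace11.
- by rewrite /Defs.hermitianmx ctM trmxCK.
- exact: psd_ct.
Qed.

Lemma tr_u n (u : 'rV[C]_n) X : \tr (u^t* *m u *m X) = (u *m X *m u^t*) 0 0.
Proof. by rewrite -mulmxA mxtrace_mulC trace11. Qed.

Lemma density_conj n (U rho : 'M[C]_n) : U *m U^t* = 1%:M -> density rho ->
  density (U *m rho *m U^t*).
Proof.
move=> hU [h1 h2 h3]; split.
- by rewrite /Defs.hermitianmx !ctM trmxCK h1 mulmxA.
- move=> v; have -> : v *m (U *m rho *m U^t*) *m v^t* = (v *m U) *m rho *m (v *m U)^t*.
    by rewrite ctM !mulmxA.
  exact: h2.
- by rewrite mxtrace_mulC mulmxA (mulmx1C hU) mul1mx.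
Qed.

Lemma ReD (x y : C) : complex.Re (x + y) = complex.Re x + complex.Re y.
Proof. by case: x; case: y. Qed.
Lemma Re_sum (I : finType) (F : I -> C) :
  complex.Re (\sum_i F i) = \sum_i complex.Re (F i).
Proof. by elim/big_rec2: _ => // i a b _ <-; rewrite ReD. Qed.
Lemma ReMr (x : C) (r : R) : complex.Re (x * (r%:C)%C) = complex.Re x * r.
Proof. by case: x => a b /=; rewrite !mulr0 subr0. Qed.
Lemma ReC (r : R) : complex.Re ((r%:C)%C) = r. Proof. by []. Qed.
Lemma Re_ge0 (x : C) : 0 <= x -> 0 <= complex.Re x.
Proof. by rewrite lecE => /andP[]. Qed.
Lemma rc_sum (I : finType) (F : I -> R) : ((\sum_i F i)%:C)%C = \sum_i ((F i)%:C)%C.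
Proof. exact: rmorph_sum. Qed.

Section Herm.
Variables (n : nat) (A U : 'M[C]_n) (l : 'I_n -> R).
Local Notation D := (diag_mx (\row_i ((l i)%:C)%C)).
Hypothesis hU : U *m U^t* = 1%:M.
Hypothesis AE : A = U^t* *m D *m U.
Let hU' : U^t* *m U = 1%:M. Proof. exact: mulmx1C. Qed.
Let mulKt m (X : 'M[C]_(m, n)) : X *m U *m U^t* = X.
Proof. by rewrite -mulmxA hU mulmx1. Qed.

Lemma UAU : U *m A *m U^t* = D.
Proof. by rewrite AE !mulmxA hU mul1mx -mulmxA hU mulmx1. Qed.

Lemma trA : \tr A = ((\sum_i l i)%:C)%C.
Proof. by rewrite AE tr_conj // mxtrace_diag rc_sum; apply: eq_bigr => i _; rewrite mxE. Qed.

Lemma trAA : \tr (A *m A) = ((\sum_i l i ^+ 2)%:C)%C.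
Proof.
have -> : A *m A = U^t* *m (D *m D) *m U.
  by rewrite AE !mulmxA mulKt.
rewrite tr_conj // mulmx_diag mxtrace_diag rc_sum.
by apply: eq_bigr => i _; rewrite !mxE rmorphXn expr2.
Qed.

Lemma trrho rho : density rho -> exists mu : 'I_n -> R,
  [/\ forall i, 0 <= mu i, \sum_i mu i = 1 &
      complex.Re (\tr (rho *m A)) = \sum_i mu i * l i].
Proof.
case=> h1 h2 h3; exists (fun i => complex.Re ((U *m rho *m U^t*) i i)); split.
- by move=> i; apply: Re_ge0; exact: psd_entry.
- by rewrite -Re_sum -/(mxtrace _) mxtrace_mulC mulmxA hU' mul1mx h3.
- have -> : rho *m A = U^t* *m ((U *m rho *m U^t*) *m D) *m U.
    by rewrite AE !mulmxA hU' mul1mx.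
  rewrite tr_conj // mul_mx_diag /mxtrace Re_sum; apply: eq_bigr => i _.
  by rewrite !mxE ReMr.
Qed.

Lemma eig_state i : exists rho, density rho /\ \tr (rho *m A) = ((l i)%:C)%C.
Proof.
exists ((row i U)^t* *m row i U); split.
  apply: density_u; have := row_sandwich U 1%:M i.
  rewrite !mulmx1 hU => ->; by rewrite mxE eqxx.
by rewrite tr_u row_sandwich UAU mxE eqxx mulr1n mxE.
Qed.


Lemma rank1_form i y : (forall k, k != i -> l k = y) ->
  A = ((y%:C)%C)%:M + (((l i - y)%:C)%C) *: ((row i U)^t* *m row i U).
Proof.
move=> hy.
have DE : D = ((y%:C)%C)%:M + (((l i - y)%:C)%C) *: delta_mx i i.
  apply/matrixP => a b; rewrite !mxE.
  have [<-|ab] := eqVneq a b; last first.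
    rewrite !mulr0n add0r; have [ai|_] := eqVneq a i; last by rewrite mulr0.
    by rewrite /= -ai eq_sym (negbTE ab) mulr0.
  rewrite !mulr1n andbb; have [->|ai] := eqVneq a i; first by rewrite mulr1 -rmorphD /= addrC subrK.
  by rewrite mulr0 addr0 hy.
have dE : (delta_mx 0 i : 'rV[C]_n)^t* = delta_mx i 0.
  by apply/matrixP => a b; rewrite !mxE; case: eqP; case: eqP => //= _ _; rewrite ?conjC1 ?conjC0.
rewrite AE DE mulmxDr mulmxDl mul_mx_scalar -scalemxAl hU' scalemx1; congr (_ + _).
rewrite -scalemxAr -scalemxAl; congr (_ *: _).
by rewrite rowE ctM dE -mulmxA mulmxA -[delta_mx i i](@mul_delta_mx C n 1 n 0 i i) !mulmxA.
Qed.

End Herm.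

Section Neg.
Local Open Scope classical_set_scope.
Variables (d : nat) (Q : 'I_(d ^ 2) -> 'M[C]_d).

Lemma ns_le rho c : 0 <= c -> (forall j, - complex.Re (\tr (rho *m Q j)) <= c) ->
  negativity_state Q rho <= c.
Proof.
move=> c0 h; rewrite /negativity_state ge_max c0 /=.
by apply: bigmax_le => // j _; exact: h.
Qed.

Lemma ns_ge rho j : - complex.Re (\tr (rho *m Q j)) <= negativity_state Q rho.
Proof.
rewrite /negativity_state le_max; apply/orP; right.
by rewrite (bigD1 j) //= le_max lexx.
Qed.

Hypothesis ex_dens : exists rho : 'M[C]_d, density rho.

Lemma neg_le c : 0 <= c ->
  (forall rho j, density rho -> - complex.Re (\tr (rho *m Q j)) <= c) ->
  negativity Q <= c.
Proof.
move=> c0 h; apply: ge_sup.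
  by case: ex_dens => rho hr; exists (negativity_state Q rho); exists rho.
by move=> x [rho hr ->]; apply: ns_le => // j; exact: h.
Qed.

Hypothesis bnd : exists2 c, 0 <= c &
  (forall rho j, density rho -> - complex.Re (\tr (rho *m Q j)) <= c).

Lemma neg_ge rho j : density rho -> - complex.Re (\tr (rho *m Q j)) <= negativity Q.
Proof.
move=> hr; apply: le_trans (ns_ge rho j) _.
apply: sup_upper_bound; last by exists rho.
split; first by exists (negativity_state Q rho); exists rho.
case: bnd => c c0 hc; exists c => x [r hr' ->]; apply: ns_le => // k; exact: hc.
Qed.
End Neg.

Section Real.
Variable n : nat.
Implicit Types F : 'I_n -> R.

Lemma offD F i : \sum_k F k = F i + \sum_(k | k != i) F k.
Proof. exact: bigD1. Qed.

Lemma off_const (c : R) (i : 'I_n) : \sum_(k | k != i) c = (n%:R - 1) * c.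
Proof.
have := offD (fun=> c) i; rewrite sumr_const card_ord => h.
by rewrite mulrBl mul1r mulr_natl h addrC addKr.
Qed.

Lemma off_sq F i (x y : R) :
  \sum_(k | k != i) (x * F k + y) ^+ 2 =
  x ^+ 2 * \sum_(k | k != i) F k ^+ 2 + 2 * x * y * \sum_(k | k != i) F k
  + (n%:R - 1) * y ^+ 2.
Proof.
rewrite -(off_const _ i) !mulr_sumr -!big_split /=; apply: eq_bigr => k _; ring.
Qed.

Lemma sum_cross F : (forall k, 0 <= F k) ->
  (\sum_k F k) ^+ 2 - \sum_k F k ^+ 2 = \sum_k F k * (\sum_l F l - F k)
  /\ forall k, 0 <= F k * (\sum_l F l - F k).
Proof.
move=> h; split.
  rewrite expr2 mulr_suml -sumrB; apply: eq_bigr => k _; ring.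
move=> k; apply: mulr_ge0 => //; rewrite (offD _ k) addrAC subrr add0r.
by apply: sumr_ge0.
Qed.
End Real.

Section Real2.
Variable d : nat.
Hypothesis d2 : (2 <= d)%N.
Local Notation s := (Num.sqrt (d.+1%:R : R)).
Local Notation D := (d%:R : R).

Lemma s2 : s ^+ 2 = D + 1.
Proof. by rewrite sqr_sqrtr // -natr1. Qed.
Lemma s0 : 0 <= s. Proof. exact: sqrtr_ge0. Qed.
Lemma D2 : 2 <= D. Proof. by rewrite (ler_nat R 2 d). Qed.

Lemma upper_eig (l : 'I_d -> R) : \sum_k l k = 1 -> \sum_k l k ^+ 2 = D ->
  forall i, (1 - (D - 1) * s) / D <= l i.
Proof.
move=> h1 h2 i.
have e1 : \sum_(k | k != i) l k = 1 - l i by rewrite -h1 (offD _ i) addrAC subrr add0r.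
have e2 : \sum_(k | k != i) l k ^+ 2 = D - l i ^+ 2.
  by rewrite -h2 (offD (fun k => l k ^+ 2) i) addrAC subrr add0r.
have := off_sq l i (D - 1) (- (1 - l i)).
rewrite e1 e2 => E.
have : 0 <= \sum_(k | k != i) ((D - 1) * l k + - (1 - l i)) ^+ 2.
  by apply: sumr_ge0 => k _; apply: sqr_ge0.
rewrite E => H.
have hs := s2; have hs0 := s0; have hD := D2.
rewrite ler_pdivrMr; last by lra.
have HK : 0 <= (D - 1) * (D - l i ^+ 2) - (1 - l i) ^+ 2.
  have e : (D - 1) ^+ 2 * (D - l i ^+ 2) + 2 * (D - 1) * - (1 - l i) * (1 - l i) +
      (D - 1) * (- (1 - l i)) ^+ 2 = (D - 1) * ((D - 1) * (D - l i ^+ 2) - (1 - l i) ^+ 2).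
    by ring.
  rewrite e in H; rewrite -(pmulr_rge0 _ (_ : 0 < D - 1)) //; lra.
have HT : (1 - l i * D) ^+ 2 <= ((D - 1) * s) ^+ 2.
  rewrite exprMn hs; have : 0 <= D * ((D - 1) * (D - l i ^+ 2) - (1 - l i) ^+ 2).
    by apply: mulr_ge0 => //; lra.
  move=> h; have e : D * ((D - 1) * (D - l i ^+ 2) - (1 - l i) ^+ 2) =
    (D - 1) ^+ 2 * (D + 1) - (1 - l i * D) ^+ 2 by ring.
  lra.
have hu : 0 <= (D - 1) * s by apply: mulr_ge0 => //; lra.
have : 1 - l i * D <= (D - 1) * s.
  case: (lerP (1 - l i * D) 0) => h; first lra.
  by rewrite -(ler_pXn2r (_ : 0 < 2)%N) // ?nnegrE //; lra.
lra.
Qed.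

Lemma sum_sq (F : 'I_d -> R) (x y : R) :
  \sum_k (x * F k + y) ^+ 2 = x ^+ 2 * \sum_k F k ^+ 2 + 2 * x * y * \sum_k F k + D * y ^+ 2.
Proof.
have -> : D * y ^+ 2 = \sum_(k < d) y ^+ 2 by rewrite sumr_const card_ord mulr_natl.
rewrite !mulr_sumr -!big_split /=; apply: eq_bigr => k _; ring.
Qed.

Lemma sum_lin (F : 'I_d -> R) (y : R) : \sum_k (F k + y) = \sum_k F k + D * y.
Proof. by rewrite big_split /= sumr_const card_ord mulr_natl. Qed.

Lemma upper_eq (l : 'I_d -> R) i : \sum_k l k = 1 -> \sum_k l k ^+ 2 = D ->
  l i = (1 - (D - 1) * s) / D -> forall k, k != i -> l k = (1 + s) / D.
Proof.
move=> h1 h2 hi.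
have e1 : \sum_(k | k != i) l k = 1 - l i by rewrite -h1 (offD _ i) addrAC subrr add0r.
have e2 : \sum_(k | k != i) l k ^+ 2 = D - l i ^+ 2.
  by rewrite -h2 (offD (fun k => l k ^+ 2) i) addrAC subrr add0r.
have := off_sq l i 1 (- ((1 + s) / D)).
rewrite e1 e2 hi => E.
have hD : D = s ^+ 2 - 1 by rewrite s2; ring.
have hs1 : s ^+ 2 - 1 != 0 by rewrite -hD; have := D2; lra.
have Z : \sum_(k | k != i) (1 * l k + - ((1 + s) / D)) ^+ 2 = 0.
  rewrite E hD; field => //.
move=> k ki; have := psumr_eq0P (fun k _ => sqr_ge0 _) Z ki.
by move/eqP; rewrite sqrf_eq0 mul1r subr_eq0 => /eqP.
Qed.

Lemma lower_core (l : 'I_d -> R) (m : R) : \sum_k l k = 1 -> \sum_k l k ^+ 2 = D ->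
  (forall k, - l k <= m) ->
  let x := fun k => l k + m in
  [/\ \sum_k x k = 1 + D * m, \sum_k x k ^+ 2 = D + 2 * m + D * m ^+ 2,
      (forall k, 0 <= x k),
      (\sum_k x k) ^+ 2 - \sum_k x k ^+ 2 = \sum_k x k * (\sum_l x l - x k)
  & forall k, 0 <= x k * (\sum_l x l - x k)].
Proof.
move=> h1 h2 hm x.
have hx : forall k, 0 <= x k by move=> k; rewrite /x; have := hm k; lra.
have [c1 c2] := sum_cross hx.
split => //.
- by rewrite sum_lin h1.
- have := sum_sq l 1 m; rewrite h1 h2 => e.
  by rewrite /x; under eq_bigr do rewrite -[l _]mul1r; rewrite e; ring.
Qed.

Lemma lower_eig (l : 'I_d -> R) (m : R) : \sum_k l k = 1 -> \sum_k l k ^+ 2 = D ->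
  (forall k, - l k <= m) -> (s - 1) / D <= m.
Proof.
move=> h1 h2 hm; have [c1 c2 c3 c4 c5] := lower_core h1 h2 hm.
have T0 : 0 <= 1 + D * m by rewrite -c1; apply: sumr_ge0 => k _.
have G : 0 <= (1 + D * m) ^+ 2 - (D + 2 * m + D * m ^+ 2).
  by rewrite -c1 -c2 c4; apply: sumr_ge0 => k _.
have hD := D2; have hs := s2; have hs0 := s0.
have Q1 : 0 <= D * m ^+ 2 + 2 * m - 1.
  have e : (1 + D * m) ^+ 2 - (D + 2 * m + D * m ^+ 2) = (D - 1) * (D * m ^+ 2 + 2 * m - 1) by ring.
  rewrite e in G; rewrite -(pmulr_rge0 _ (_ : 0 < D - 1)) //; lra.
have Q2 : s ^+ 2 <= (1 + D * m) ^+ 2.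
  rewrite hs; have : 0 <= D * (D * m ^+ 2 + 2 * m - 1) by apply: mulr_ge0 => //; lra.
  have e : D * (D * m ^+ 2 + 2 * m - 1) = (1 + D * m) ^+ 2 - (D + 1) by ring.
  lra.
have : s <= 1 + D * m by rewrite -(ler_pXn2r (_ : 0 < 2)%N) // ?nnegrE.
rewrite ler_pdivrMr; last by lra.
lra.
Qed.

Lemma lower_eq (l : 'I_d -> R) : \sum_k l k = 1 -> \sum_k l k ^+ 2 = D ->
  (forall k, - l k <= (s - 1) / D) ->
  exists i, l i = s - (s - 1) / D /\ forall k, k != i -> l k = - ((s - 1) / D).
Proof.
move=> h1 h2 hm; have [c1 c2 c3 c4 c5] := lower_core h1 h2 hm.
set m := (s - 1) / D in c1 c2 c3 c4 c5 *.
set x := fun k => l k + m in c1 c2 c3 c4 c5.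
have hD := D2; have hs := s2; have hs0 := s0.
have hD' : D = s ^+ 2 - 1 by rewrite hs; ring.
have hs1 : s ^+ 2 - 1 != 0 by rewrite -hD'; lra.
have T : 1 + D * m = s by rewrite /m hD'; field.
have S2 : D + 2 * m + D * m ^+ 2 = s ^+ 2 by rewrite /m hD'; field.
have Z : \sum_k x k * (\sum_l x l - x k) = 0 by rewrite -c4 c1 c2 T S2 subrr.
have Zk := psumr_eq0P (fun k _ => c5 k) Z.
have sp : 0 < s.
  rewrite lt_neqAle hs0 andbT; apply/eqP => s0'; move: hs; rewrite -s0' expr0n /=; lra.
have [/existsP [i xi]|nE] := boolP [exists i, x i != 0]; last first.
  exfalso; have : \sum_k x k = 0.
    by apply: big1 => k _; apply/eqP; apply: contraNT nE => h; apply/existsP; exists k.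
  lra.
exists i; have := Zk i isT; move/eqP; rewrite mulf_eq0 (negbTE xi) /= subr_eq0 c1 T => /eqP xs.
have R0 : \sum_(k | k != i) x k = 0.
  by have := c1; rewrite T (offD _ i) -xs => /eqP; rewrite -subr_eq0 addrAC subrr add0r => /eqP.
split; first by move: xs; rewrite /x; lra.
move=> k ki; have := psumr_eq0P (fun k _ => c3 k) R0 ki; rewrite /x; lra.
Qed.
End Real2.

Lemma Cinj (r r' : R) : (r%:C)%C = (r'%:C)%C -> r = r'.
Proof. by case. Qed.

Lemma u_proj n (u : 'rV[C]_n) : (u *m u^t*) 0 0 = 1 ->
  [/\ Defs.hermitianmx (u^t* *m u), (u^t* *m u) *m (u^t* *m u) = u^t* *m u,
      \rank (u^t* *m u) = 1%N & \tr (u^t* *m u) = 1].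
Proof.
move=> h.
have h1 : u *m u^t* = 1%:M by apply/matrixP => a b; rewrite !ord1 h mxE.
have tr1 : \tr (u^t* *m u) = 1 by rewrite mxtrace_mulC trace11.
have idem : (u^t* *m u) *m (u^t* *m u) = u^t* *m u.
  by rewrite mulmxA -(mulmxA _ u) h1 mulmx1.
split => //.
- by rewrite /Defs.hermitianmx ctM trmxCK.
- apply/eqP; rewrite eqn_leq; apply/andP; split.
    exact: (leq_trans (mxrankM_maxr _ _) (rank_leq_row _)).
  rewrite lt0n mxrank_eq0; apply/eqP => P0.
  by move: tr1; rewrite P0 mxtrace0 => /eqP; rewrite eq_sym oner_eq0.
Qed.

Lemma sic_tr d (Q P : 'I_(d ^ 2) -> 'M[C]_d) (e c : C) :
  NQPR Q -> (forall j, Q j = e *: P j + c%:M) -> e ^+ 2 = (d.+1)%:R -> e != 0 ->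
  c ^+ 2 * d%:R - 2 * c = 1 ->
  forall j k, \tr (P j *m P k) = (d%:R * (j == k)%:R + 1) / (d.+1)%:R.
Proof.
move=> [_ [t1 t2]] hQ he e0 hc j k.
have PE : forall j, P j = e^-1 *: (Q j - c%:M).
  by move=> i; rewrite hQ addrK scalerA mulVf // scale1r.
rewrite !PE -scalemxAl -scalemxAr !mxtraceZ mulmxBl !mulmxBr !mul_mx_scalar !mul_scalar_mx.
rewrite !linearB /= !mxtraceZ mxtrace_scalar t2 !t1 -he -(mulr_natr c d).
transitivity ((d%:R * (j == k)%:R + (c ^+ 2 * d%:R - 2 * c)) / e ^+ 2); last by rewrite hc.
by field.
Qed.

Lemma conv_ge n (mu l : 'I_n -> R) c : (forall i, 0 <= mu i) -> \sum_i mu i = 1 ->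
  (forall i, c <= l i) -> c <= \sum_i mu i * l i.
Proof.
move=> h0 h1 hc; have -> : c = \sum_i mu i * c by rewrite -mulr_suml h1 mul1r.
by apply: ler_sum => i _; apply: ler_wpM2l.
Qed.

Section Main.
Variables (d : nat) (Q : 'I_(d ^ 2) -> 'M[C]_d).
Hypothesis d2 : (2 <= d)%N.
Hypothesis hQ : NQPR Q.
Local Notation s := (Num.sqrt (d.+1%:R : R)).
Local Notation D := (d%:R : R).
Local Notation lj j := (lam (Q j)).
Local Notation Uj j := (UU (Q j)).

Lemma hermQ j : Defs.hermitianmx (Q j). Proof. by case: hQ. Qed.
Lemma trQ j : \tr (Q j) = 1. Proof. by case: hQ => _ []. Qed.
Lemma trQQ j k : \tr (Q j *m Q k) = d%:R * (j == k)%:R. Proof. by case: hQ => _ []. Qed.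
Lemma AEj j : Q j = (Uj j)^t* *m diag_mx (\row_i ((lj j i)%:C)%C) *m Uj j.
Proof. exact: spec_decomp (hermQ j). Qed.
Lemma hUj j : Uj j *m (Uj j)^t* = 1%:M. Proof. exact: UU_unit. Qed.

Lemma natC k : (((k%:R : R)%:C)%C : C) = k%:R. Proof. exact: rmorph_nat. Qed.

Lemma sum1 j : \sum_i lj j i = 1.
Proof. by apply: Cinj; rewrite -(trA (hUj j) (AEj j)) trQ. Qed.
Lemma sum2 j : \sum_i lj j i ^+ 2 = D.
Proof. by apply: Cinj; rewrite -(trAA (hUj j) (AEj j)) trQQ eqxx mulr1 natC. Qed.

Lemma s1 : 1 <= s.
Proof.
have := s2 d; have := s0 d; have := D2 d2 => h0 h1 h2.
rewrite -(ler_pXn2r (_ : 0 < 2)%N) ?nnegrE // ?expr1n; lra.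
Qed.

Definition aa := ((D - 1) * s - 1) / D.

Lemma NplusE : Nplus R d = aa.
Proof.
have h : (0 < d)%N by exact: leq_trans d2.
rewrite /Nplus /aa; have -> : (d.-1)%:R = D - 1 :> R by rewrite -[in RHS](prednK h) -natr1 addrK.
by [].
Qed.
Lemma aa0 : 0 <= aa.
Proof.
have := s1; have := D2 d2 => h0 h1; apply: divr_ge0; last lra.
have : 1 <= (D - 1) * s by nra.
lra.
Qed.

Lemma bnd rho j : density rho -> - complex.Re (\tr (rho *m Q j)) <= aa.
Proof.
move=> hr; have [mu [m0 m1 ->]] := trrho (hUj j) (AEj j) hr.
have := conv_ge m0 m1 (upper_eig d2 (sum1 j) (sum2 j)).
have := D2 d2 => hD h; rewrite /aa.
have -> : ((D - 1) * s - 1) / D = - ((1 - (D - 1) * s) / D) by rewrite -mulNr opprB.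
by rewrite lerN2.
Qed.

Let d0 : (0 < d)%N. Proof. exact: leq_trans d2. Qed.
Let j0 : 'I_(d ^ 2). Proof. by exists 0%N; rewrite expn_gt0 d0. Defined.
Let i0 : 'I_d := Ordinal d0.

Lemma exd : exists rho : 'M[C]_d, density rho.
Proof. by have [rho [h _]] := eig_state (hUj j0) (AEj j0) i0; exists rho. Qed.

Lemma bndE : exists2 c, 0 <= c &
  (forall rho j, density rho -> - complex.Re (\tr (rho *m Q j)) <= c).
Proof. by exists aa; [exact: aa0 | move=> rho j; exact: bnd]. Qed.

Lemma negle : negativity Q <= aa.
Proof. apply: neg_le exd _ aa0 _ => rho j; exact: bnd. Qed.

Lemma eigle j k : - lj j k <= negativity Q.
Proof.
have [rho [hr e]] := eig_state (hUj j) (AEj j) k.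
by have := neg_ge bndE j hr; rewrite e.
Qed.

Lemma negge : (s - 1) / D <= negativity Q.
Proof. exact: (lower_eig d2 (sum1 j0) (sum2 j0) (eigle j0)). Qed.


Lemma sdE : sqrtd1 R d = ((s)%:C)%C. Proof. by []. Qed.
Lemma cmE : (1 - sqrtd1 R d) / d%:R = ((((1 - s) / D))%:C)%C.
Proof. by rewrite rmorphM rmorphB rmorph1 fmorphV rmorph_nat. Qed.
Lemma cpE : (1 + sqrtd1 R d) / d%:R = ((((1 + s) / D))%:C)%C.
Proof. by rewrite rmorphM rmorphD rmorph1 fmorphV rmorph_nat. Qed.
Lemma he : sqrtd1 R d ^+ 2 = (d.+1)%:R.
Proof. by rewrite sdE -rmorphXn s2 natr1 rmorph_nat. Qed.
Lemma e0 : sqrtd1 R d != 0.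
Proof.
apply/eqP; rewrite sdE => h; have : s = 0 by apply: Cinj; rewrite h.
by have := s1; lra.
Qed.
Lemma dC0 : (d%:R : C) != 0. Proof. by rewrite pnatr_eq0 -lt0n d0. Qed.

Lemma hcm : ((1 - sqrtd1 R d) / d%:R) ^+ 2 * d%:R - 2 * ((1 - sqrtd1 R d) / d%:R) = 1.
Proof.
have h := dC0; transitivity ((sqrtd1 R d ^+ 2 - 1) / d%:R); first by field.
by rewrite he -natr1 addrK divff.
Qed.
Lemma hcp : ((1 + sqrtd1 R d) / d%:R) ^+ 2 * d%:R - 2 * ((1 + sqrtd1 R d) / d%:R) = 1.
Proof.
have h := dC0; transitivity ((sqrtd1 R d ^+ 2 - 1) / d%:R); first by field.
by rewrite he -natr1 addrK divff.
Qed.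

Lemma mk_SIC (f : 'I_(d ^ 2) -> 'rV[C]_d) (e c : C) :
  (forall j, (f j *m (f j)^t*) 0 0 = 1) ->
  (forall j, Q j = e *: ((f j)^t* *m f j) + c%:M) ->
  e ^+ 2 = (d.+1)%:R -> e != 0 -> c ^+ 2 * d%:R - 2 * c = 1 ->
  SIC (fun j => (f j)^t* *m f j).
Proof.
move=> hf hq hee hne hc; split; [|split; [|split]].
- by move=> j; case: (u_proj (hf j)).
- by move=> j; case: (u_proj (hf j)).
- by move=> j; case: (u_proj (hf j)).
- exact: (sic_tr hQ hq hee hne hc).
Qed.

Lemma row_norm j i : (row i (Uj j) *m (row i (Uj j))^t*) 0 0 = 1.
Proof.
have := row_sandwich (Uj j) 1%:M i.
by rewrite !mulmx1 hUj => ->; rewrite mxE eqxx.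
Qed.

Lemma minus_fwd : negativity Q = Nminus R d ->
  exists P, SIC P /\ forall j, Q j = Qminus P j.
Proof.
move=> hN.
have hm : forall j k, - lj j k <= (s - 1) / D.
  by move=> j k; have := eigle j k; rewrite hN.
have H : forall j, exists2 u : 'rV[C]_d, (u *m u^t*) 0 0 = 1 &
    Q j = sqrtd1 R d *: (u^t* *m u) + ((1 - sqrtd1 R d) / d%:R)%:M.
  move=> j; have [i [li lk]] := lower_eq d2 (sum1 j) (sum2 j) (hm j).
  exists (row i (Uj j)); first exact: row_norm.
  rewrite {1}(rank1_form (hUj j) (AEj j) lk) li addrC opprK subrK cmE; congr (_ + _).
  by rewrite -mulNr opprB.
have [f hf1 hf2] := fin_all_exists2 H.
exists (fun j => (f j)^t* *m f j); split; last exact: hf2.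
exact: (mk_SIC hf1 hf2 he e0 hcm).
Qed.

Lemma trPge0 (P : 'M[C]_d) rho : Defs.hermitianmx P -> P *m P = P -> density rho ->
  0 <= complex.Re (\tr (rho *m P)).
Proof.
move=> hP iP [_ hr _]; apply: Re_ge0.
have -> : rho *m P = rho *m (P^t* *m P) by rewrite hP iP.
by rewrite mulmxA mxtrace_mulC mulmxA; apply: psd_tr.
Qed.

Lemma trQmix (P : 'M[C]_d) rho (e c : R) : density rho ->
  complex.Re (\tr (rho *m ((e%:C)%C *: P + ((c%:C)%C)%:M))) =
  e * complex.Re (\tr (rho *m P)) + c.
Proof.
case=> _ _ t1.
rewrite mulmxDr -scalemxAr mul_mx_scalar linearD /= !mxtraceZ t1 mulr1 ReD.
by rewrite mulrC ReMr mulrC.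
Qed.

Lemma minus_bwd P : SIC P -> (forall j, Q j = Qminus P j) -> negativity Q = Nminus R d.
Proof.
move=> [h1 [h2 _]] hq; apply/le_anti; rewrite negge andbT.
have := s1; have := D2 d2 => hD hs.
apply: (neg_le exd); first by apply: divr_ge0; lra.
move=> rho j hr; rewrite hq /Qminus cmE sdE trQmix //.
have := trPge0 (h1 j) (h2 j) hr => t0.
have hx : 0 <= s * complex.Re (\tr (rho *m P j)) by apply: mulr_ge0 => //; lra.
have -> : (1 - s) / D = - ((s - 1) / D) by rewrite -mulNr opprB.
rewrite /Nminus; lra.
Qed.


Lemma le_bmax n (F : 'I_n -> R) k : F k <= \big[Num.max/0]_i F i.
Proof. by rewrite (bigD1 k) //= le_max lexx. Qed.

Lemma conv_eq n (mu l : 'I_n -> R) c : (forall i, 0 <= mu i) -> \sum_i mu i = 1 ->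
  (forall i, c <= l i) -> \sum_i mu i * l i = c -> exists i, l i = c.
Proof.
move=> h0 h1 hc he.
have Z : \sum_i mu i * (l i - c) = 0.
  have -> : \sum_i mu i * (l i - c) = \sum_i mu i * l i - (\sum_i mu i) * c.
    by rewrite mulr_suml -sumrB; apply: eq_bigr => i _; rewrite mulrBr.
  by rewrite he h1 mul1r subrr.
have P0 : forall i, true -> 0 <= mu i * (l i - c).
  by move=> i _; apply: mulr_ge0 => //; rewrite subr_ge0.
have Zi := psumr_eq0P P0 Z.
have [/existsP [i mi]|nE] := boolP [exists i, mu i != 0]; last first.
  exfalso; have : \sum_i mu i = 0.
    by apply: big1 => k _; apply/eqP; apply: contraNT nE => h; apply/existsP; exists k.
  by rewrite h1 => /eqP; rewrite oner_eq0.
exists i; have := Zi i isT => /eqP.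
by rewrite mulf_eq0 (negbTE mi) subr_eq0 => /eqP.
Qed.

Lemma tr_conj2 (U rho X : 'M[C]_d) : U *m U^t* = 1%:M ->
  \tr ((U *m rho *m U^t*) *m (U *m X *m U^t*)) = \tr (rho *m X).
Proof.
move=> h; have h' := mulmx1C h.
rewrite !mulmxA -(mulmxA (U *m rho) (U^t*) U) h' mulmx1 mxtrace_mulC !mulmxA h' mul1mx.
by [].
Qed.

Lemma aa_gt0 : 0 < aa.
Proof.
have := s2 d; have := s0 d; have := D2 d2 => h0 h1 h2.
have : 1 < s.
  rewrite -(ltr_pXn2r (_ : 0 < 2)%N) ?nnegrE // ?expr1n; lra.
move=> h; apply: divr_gt0; last lra.
have : s <= (D - 1) * s by rewrite -{1}[s]mul1r; apply: ler_wpM2r; lra.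
lra.
Qed.

Lemma plus_bwd P : SIC P -> (forall j, Q j = Qplus P j) -> negativity Q = Nplus R d.
Proof.
move=> [h1 [h2 [_ h4]]] hq; rewrite NplusE; apply/le_anti; rewrite negle /=.
have tP : \tr (P j0 *m P j0) = 1.
  by rewrite h4 eqxx mulr1 natr1 divff // pnatr_eq0.
have dP : density (P j0).
  split => //; first by rewrite /psdmx -{1}(h2 j0) -{1}h1; apply: psd_ct.
  by rewrite -{1}(h2 j0).
have := neg_ge bndE j0 dP; rewrite hq /Qplus cpE sdE -scaleNr -rmorphN trQmix // tP.
have -> : - ((- s) * complex.Re 1 + (1 + s) / D) = aa.
  rewrite /aa /= mulr1; field; by rewrite pnatr_eq0 -lt0n d0.
by [].
Qed.

Lemma plus_fwd : group_covariant Q -> negativity Q = Nplus R d ->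
  exists P, SIC P /\ forall j, Q j = Qplus P j.
Proof.
move=> cov hN; rewrite NplusE in hN.
set cc := (1 - (D - 1) * s) / D.
have ccE : - cc = aa by rewrite /cc /aa -mulNr opprB.
have [[j1 [i1 hl]]|nex] := pselect (exists j i, lj j i = cc); last first.
  exfalso.
  have gt : forall j i, - lj j i < aa.
    move=> j i; rewrite -ccE ltrN2 lt_neqAle upper_eig ?sum1 ?sum2 // andbT.
    by apply/eqP => h; apply: nex; exists j, i; rewrite h.
  set M := \big[Num.max/0]_j \big[Num.max/0]_i (- lj j i).
  have MA : M < aa.
    apply: (big_ind (fun x => x < aa)) => //; first exact: aa_gt0.
      by move=> x y hx hy; rewrite gt_max hx hy.
    move=> j _; apply: (big_ind (fun x => x < aa)) => //; first exact: aa_gt0.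
    by move=> x y hx hy; rewrite gt_max hx hy.
  have : negativity Q <= Num.max 0 M.
    apply: (neg_le exd); first by rewrite le_max lexx.
    move=> rho j hr; have [mu [m0 m1 ->]] := trrho (hUj j) (AEj j) hr.
    have : - M <= \sum_i mu i * lj j i.
      apply: conv_ge m0 m1 _ => i; rewrite lerNl.
      exact: le_trans (le_bmax (fun i => - lj j i) i) (le_bmax (fun j => \big[Num.max/0]_i (- lj j i)) j).
    move=> h; rewrite le_max; apply/orP; right; lra.
  rewrite hN; have := aa_gt0 => a0; rewrite le_max => /orP[]; lra.
have [rho0 [hr0 e0']] := eig_state (hUj j1) (AEj j1) i1.
have H : forall k, exists2 u : 'rV[C]_d, (u *m u^t*) 0 0 = 1 &
    Q k = (- sqrtd1 R d) *: (u^t* *m u) + ((1 + sqrtd1 R d) / d%:R)%:M.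
  move=> k; have [U [[/unitarymxP hU _] hUQ]] := cov j1 k.
  have hr1 := density_conj hU hr0.
  have [mu [m0 m1 hmu]] := trrho (hUj k) (AEj k) hr1.
  have : complex.Re (\tr ((U *m rho0 *m U^t*) *m Q k)) = cc.
    by rewrite -hUQ tr_conj2 // e0' hl.
  rewrite hmu => hsum.
  have [i hi] := conv_eq m0 m1 (upper_eig d2 (sum1 k) (sum2 k)) hsum.
  have lk := upper_eq d2 (sum1 k) (sum2 k) hi.
  exists (row i (Uj k)); first exact: row_norm.
  rewrite {1}(rank1_form (hUj k) (AEj k) lk) addrC cpE sdE hi; congr (_ + _).
  rewrite -rmorphN; congr (_ *: _); congr ((_)%:C)%C.
  rewrite /cc; field; by rewrite pnatr_eq0 -lt0n d0.
have [f hf1 hf2] := fin_all_exists2 H.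
exists (fun j => (f j)^t* *m f j); split; last first.
  by move=> j; rewrite hf2 /Qplus scaleNr.
apply: (mk_SIC hf1 hf2); first by rewrite sqrrN he.
  by rewrite oppr_eq0 e0.
exact: hcp.
Qed.

End Main.
End S.

Unset Implicit Arguments.
Theorem theorem1 (R : realType) (d : nat) (Q : 'I_(d ^ 2) -> 'M[R[i]]_d) :
  (2 <= d)%N -> NQPR Q ->
  [/\ Nminus R d <= negativity Q <= Nplus R d,
      negativity Q = Nminus R d <->
        (exists P, SIC P /\ forall j, Q j = Qminus P j)
    & group_covariant Q ->
      (negativity Q = Nplus R d <->
        (exists P, SIC P /\ forall j, Q j = Qplus P j))].
Proof.
move=> d2 hQ; split.
- apply/andP; split; first exact: (negge d2 hQ).
  by rewrite (NplusE _ d2); exact: (negle d2 hQ).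
- split; first exact: (minus_fwd d2 hQ).
  by case=> P [hP hq]; exact: (minus_bwd d2 hQ hP hq).
- move=> cov; split; first exact: (plus_fwd d2 hQ cov).
  by case=> P [hP hq]; exact: (plus_bwd d2 hQ hP hq).
Qed.
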